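(* If $G$ is a connected locally finite quasi-transitive graph with exactly $2$ ends, then there exists a periodic proper edge-coloring of $G$ with $\chi'(G)$ colors.
   Context: A graph is locally finite if every vertex has finite degree; quasi-transitive if $V(G)$ has finitely many orbits under $\mathrm{Aut}(G)$. Ends are equivalence classes of rays (infinite one-way paths), two rays being equivalent if there are infinitely many disjoint paths between them. $\chi'(G)$ is the chromatic index, the minimum number of colors in a proper edge-coloring (adjacent edges get distinct colors). An edge-coloring is periodic if the subgroup of automorphisms of $G$ mapping every edge to an edge of the same color has finitely many orbits on $V(G)$. *)

(* Defs.v *)
From Stdlib Require Import List Arith.
Import ListNotations.

Section Graphs.
Context {V : Type}.
Variable adj : V -> V -> Prop.

Definition simple_graph : Prop :=
  (forall x y, adj x y -> adj y x) /\ (forall x, ~ adj x x).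

Definition locally_finite : Prop :=
  forall v, exists l : list V, forall w, adj v w -> In w l.

Fixpoint adj_chain (l : list V) : Prop :=
  match l with
  | x :: ((y :: _) as t) => adj x y /\ adj_chain t
  | _ => True
  end.

Definition is_path (p : list V) : Prop :=
  p <> [] /\ NoDup p /\ adj_chain p.

Definition path_from_to (p : list V) (u v : V) : Prop :=
  is_path p /\ hd_error p = Some u /\ hd_error (rev p) = Some v.

Definition connected : Prop :=
  forall u v, exists p, path_from_to p u v.

Definition automorphism (f : V -> V) : Prop :=
  (exists g : V -> V, (forall x, g (f x) = x) /\ (forall x, f (g x) = x)) /\
  (forall x y, adj x y <-> adj (f x) (f y)).

Definition quasi_transitive : Prop :=
  exists S : list V, forall v, exists s f, In s S /\ automorphism f /\ f s = v.

Definition ray (r : nat -> V) : Prop :=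
  (forall m n, r m = r n -> m = n) /\ (forall n, adj (r n) (r (S n))).

Definition equiv_rays (r1 r2 : nat -> V) : Prop :=
  exists P : nat -> list V,
    (forall i, exists m n, path_from_to (P i) (r1 m) (r2 n)) /\
    (forall i j x, i <> j -> In x (P i) -> ~ In x (P j)).

Definition has_exactly_two_ends : Prop :=
  exists r1 r2, ray r1 /\ ray r2 /\ ~ equiv_rays r1 r2 /\
    forall r, ray r -> equiv_rays r r1 \/ equiv_rays r r2.

(* edge colourings are represented by c : V -> V -> nat, c x y being the
   colour of the edge xy (values on non-edges are irrelevant) *)
Definition proper_edge_coloring (k : nat) (c : V -> V -> nat) : Prop :=
  (forall x y, adj x y -> c x y = c y x) /\
  (forall x y, adj x y -> c x y < k) /\
  (forall x y z, adj x y -> adj x z -> y <> z -> c x y <> c x z).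

Definition edge_colorable (k : nat) : Prop :=
  exists c, proper_edge_coloring k c.

Definition is_chromatic_index (k : nat) : Prop :=
  edge_colorable k /\ forall j, edge_colorable j -> k <= j.

Definition color_preserving_aut (c : V -> V -> nat) (f : V -> V) : Prop :=
  automorphism f /\ forall x y, adj x y -> c (f x) (f y) = c x y.

Definition periodic_coloring (c : V -> V -> nat) : Prop :=
  exists S : list V, forall v, exists s f,
    In s S /\ color_preserving_aut c f /\ f s = v.

End Graphs.

(* Main.v *)
Require Import Defs.
From Stdlib Require Import FinFun List Arith Lia ZArith Classical ClassicalEpsilon FunctionalExtensionality.
Import ListNotations.

Import ListNotations.

Lemma php {A : Type} (Q : nat -> A -> Prop) (W : list A) (N : nat) :
  (forall i, i < N -> exists y, In y W /\ Q i y) ->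
  (forall i j y, Q i y -> Q j y -> i = j) -> N <= length W.
Proof.
  intros H1 H2.
  assert (exists l, length l = N /\ NoDup l /\ incl l W /\
            forall y, In y l -> exists i, i < N /\ Q i y) as [l [Hl [Hnd [Hinc _]]]].
  { induction N as [|N IH].
    - exists []. repeat split; simpl; auto. constructor. intros a []. intros y [].
    - destruct IH as [l [Hl [Hnd [Hinc Hq]]]].
      + intros i Hi. apply H1. lia.
      + destruct (H1 N (Nat.lt_succ_diag_r N)) as [y [Hy Qy]].
        exists (y :: l). repeat split.
        * simpl; lia.
        * constructor; auto. intro Hin. destruct (Hq y Hin) as [i [Hi Qi]].
          assert (i = N) by (eapply H2; eauto). lia.
        * intros a [<-|Ha]; auto.
        * intros a [<-|Ha]. exists N; split; auto.
          destruct (Hq a Ha) as [i [Hi Qi]]. exists i; split; auto. }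
  rewrite <- Hl. apply NoDup_incl_length; auto.
Qed.

Lemma finite_pigeon {A : Type} (f : nat -> A) (W : list A) :
  (forall n, In (f n) W) -> exists a b, a < b /\ f a = f b.
Proof.
  intros H. apply NNPP; intro Hn.
  assert (S (length W) <= length W); [|lia].
  apply (php (fun i y => y = f i) W).
  - intros i _. exists (f i). auto.
  - intros i j y -> E. destruct (Nat.lt_trichotomy i j) as [h|[h|h]]; auto.
    + exfalso; apply Hn; exists i, j; auto.
    + exfalso; apply Hn; exists j, i; auto.
Qed.

Section G.
Context {V : Type} (adj : V -> V -> Prop).
Hypothesis Hsym : forall x y, adj x y -> adj y x.
Hypothesis Hirr : forall x, ~ adj x x.
Hypothesis Hlf : locally_finite adj.
Hypothesis Hconn : connected adj.

Definition nbrs (v : V) : list V := proj1_sig (constructive_indefinite_description _ (Hlf v)).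
Lemma nbrs_spec v w : adj v w -> In w (nbrs v).
Proof. unfold nbrs. destruct (constructive_indefinite_description _ _) as [l Hl]. simpl. auto. Qed.

Inductive wk (P : V -> Prop) : nat -> V -> V -> Prop :=
| wk0 : forall x, P x -> wk P 0 x x
| wkS : forall n x y z, P x -> adj x y -> wk P n y z -> wk P (S n) x z.

Lemma wk_start P n x y : wk P n x y -> P x.
Proof. intros H; inversion H; auto. Qed.
Lemma wk_end P n x y : wk P n x y -> P y.
Proof. induction 1; auto. Qed.
Lemma wk_mono (P Q : V -> Prop) n x y : (forall v, P v -> Q v) -> wk P n x y -> wk Q n x y.
Proof. intros HPQ; induction 1; econstructor; eauto. Qed.
Lemma wk_snoc P n x y z : wk P n x y -> adj y z -> P z -> wk P (S n) x z.
Proof. induction 1; intros; econstructor; eauto. constructor; auto. Qed.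
Lemma wk_app P n m x y z : wk P n x y -> wk P m y z -> wk P (n + m) x z.
Proof. induction 1; intros; simpl; auto. econstructor; eauto. Qed.
Lemma wk_rev P n x y : wk P n x y -> wk P n y x.
Proof. induction 1. constructor; auto. eapply wk_snoc; eauto. Qed.
Lemma wk_img (P Q : V -> Prop) (h : V -> V) n x y :
  (forall a b, adj a b -> adj (h a) (h b)) -> (forall v, P v -> Q (h v)) ->
  wk P n x y -> wk Q n (h x) (h y).
Proof. intros Ha HPQ; induction 1; econstructor; eauto. Qed.

Definition bnd (X : V -> Prop) (B : V -> Prop) : Prop :=
  forall a b, X a -> adj a b -> ~ X b -> B b.

Lemma wk_cross P X B n x y : bnd X B -> wk P n x y -> X x -> ~ X y -> exists z, P z /\ B z.
Proof.
  intros Hb. induction 1; intros Hx Hy. contradiction.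
  destruct (classic (X y)) as [Xy|Xy]; auto.
  exists y. split; [eapply wk_start; eauto| eapply Hb; eauto].
Qed.

Lemma wk_side X B n x y : bnd X B -> wk (fun v => ~ B v) n x y -> (X x <-> X y).
Proof.
  intros Hb. induction 1 as [|n x y z Px Axy W IH]. tauto.
  rewrite <- IH. split; intros H0.
  - apply NNPP; intro Hn. apply (wk_start _ _ _ _ W). eapply Hb; eauto.
  - apply NNPP; intro Hn. apply Px. eapply Hb; eauto.
Qed.

Lemma wk_exit X n x y : wk (fun _ => True) n x y -> X x -> ~ X y ->
  exists n' a b, wk X n' x a /\ adj a b /\ ~ X b.
Proof.
  induction 1; intros Hx Hy. contradiction.
  destruct (classic (X y)) as [Xy|Xy].
  - destruct (IHwk Xy Hy) as [n' [a [b [W [A B]]]]].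
    exists (S n'), a, b. repeat split; auto. econstructor; eauto.
  - exists 0, x, y. repeat split; auto. constructor; auto.
Qed.

Lemma last_def (a : V) l d d' : last (a :: l) d = last (a :: l) d'.
Proof. revert a; induction l as [|b l IH]; intros; simpl; auto. destruct l; auto. apply (IH b). Qed.
Lemma last_cons2 (x y : V) p : last (y :: p) x = last p y.
Proof. destruct p; auto. simpl. apply last_def. Qed.

Lemma adj_chain_wk (p : list V) x : adj_chain adj (x :: p) ->
  wk (fun z => In z (x :: p)) (length p) x (last p x).
Proof.
  revert x. induction p as [|y p IH]; intros x H.
  - constructor. left; auto.
  - simpl in H. destruct H as [Axy H]. simpl length.
    replace (last (y :: p) x) with (last p y) by (symmetry; apply last_cons2).
    econstructor. left; auto. exact Axy.
    eapply wk_mono; [|apply IH; auto]. intros v Hv. right; auto.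
Qed.

Lemma hd_rev_last (p : list V) x : hd_error (rev (x :: p)) = Some (last p x).
Proof.
  revert x; induction p as [|y p IH]; intros x; auto.
  replace (last (y :: p) x) with (last p y) by (symmetry; apply last_cons2).
  rewrite <- IH. change (rev (x :: y :: p)) with (rev (y :: p) ++ [x]).
  destruct (rev (y :: p)) eqn:E; auto. simpl in E. destruct (rev p); simpl in E; congruence.
Qed.

Lemma adj_chain_suffix (l1 l2 : list V) : adj_chain adj (l1 ++ l2) -> adj_chain adj l2.
Proof.
  induction l1 as [|a l1 IH]; simpl; auto. intros H. apply IH.
  destruct l1; simpl in *. destruct l2; tauto. tauto.
Qed.

Lemma hd_rev_app (l1 l2 : list V) a : hd_error (rev (l1 ++ a :: l2)) = hd_error (rev (a :: l2)).
Proof.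
  rewrite rev_app_distr. destruct (rev (a :: l2)) eqn:E; auto.
  apply (f_equal (@length V)) in E. rewrite length_rev in E. simpl in E. discriminate.
Qed.

Lemma path_wk p u v : path_from_to adj p u v -> exists n, wk (fun z => In z p) n u v.
Proof.
  intros [[Hne [Hnd Hc]] [Hh Hl]]. destruct p as [|x p]; [congruence|].
  simpl in Hh. injection Hh as <-. rewrite hd_rev_last in Hl. injection Hl as <-.
  exists (length p). apply adj_chain_wk; auto.
Qed.

Lemma wk_path P n x y : wk P n x y -> exists p, path_from_to adj p x y /\ forall z, In z p -> P z.
Proof.
  induction 1 as [x Px|n x y z Px Axy W IH].
  - exists [x]. repeat split; simpl; auto; try congruence.
    constructor; auto. constructor. intros a [<-|[]]; auto.
  - destruct IH as [p [[[Hne [Hnd Hc]] [Hh Hl]] HP]].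
    destruct p as [|y' p]; [congruence|]. simpl in Hh. injection Hh as ->.
    destruct (classic (In x (y :: p))) as [Hin|Hin].
    + apply in_split in Hin. destruct Hin as [l1 [l2 E]].
      exists (x :: l2). rewrite E in *. repeat split.
      * congruence.
      * apply NoDup_app_remove_l in Hnd. auto.
      * eapply adj_chain_suffix; eauto.
      * rewrite hd_rev_app in Hl. auto.
      * intros a Ha. apply HP. apply in_or_app; right; auto.
    + exists (x :: y :: p). unfold path_from_to, is_path. 
      split; [split; [split; [congruence|split]|split]|].
      * constructor; auto.
      * simpl. split; auto.
      * reflexivity.
      * rewrite <- Hl. apply (hd_rev_app [x]).
      * intros a [<-|Ha]; auto.
Qed.

Lemma conn_wk u v : exists p n, wk (fun z => In z p) n u v.
Proof. destruct (Hconn u v) as [p Hp]. exists p. apply path_wk; auto. Qed.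
Lemma conn_wk' u v : exists n, wk (fun _ => True) n u v.
Proof. destruct (conn_wk u v) as [p [n W]]. exists n. eapply wk_mono; [|eauto]. auto. Qed.

End G.

Import ListNotations.

Section G2.
Context {V : Type} (adj : V -> V -> Prop).
Hypothesis Hsym : forall x y, adj x y -> adj y x.
Hypothesis Hirr : forall x, ~ adj x x.
Hypothesis Hlf : locally_finite adj.
Hypothesis Hconn : connected adj.

Notation wk := (wk adj).
Notation nbrs := (nbrs adj Hlf).
Notation bnd := (bnd adj).

Definition aut2 (h hi : V -> V) : Prop :=
  (forall x, hi (h x) = x) /\ (forall x, h (hi x) = x) /\ (forall x y, adj x y <-> adj (h x) (h y)).

Lemma aut2_inv h hi : aut2 h hi -> aut2 hi h.
Proof.
  intros [H1 [H2 H3]]. split; [|split]; auto. intros x y.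
  rewrite (H3 (hi x) (hi y)), !H2. tauto.
Qed.
Lemma aut2_comp h hi g gi : aut2 h hi -> aut2 g gi -> aut2 (fun x => h (g x)) (fun x => gi (hi x)).
Proof.
  intros [H1 [H2 H3]] [G1 [G2 G3]]. split; [|split]; intros; try congruence.
  rewrite G3, H3. tauto.
Qed.
Lemma aut2_id : aut2 (fun x => x) (fun x => x).
Proof. split; [|split]; tauto. Qed.
Lemma aut_of f : automorphism adj f -> exists fi, aut2 f fi.
Proof. intros [[g [H1 H2]] H3]. exists g. split; auto. Qed.
Lemma aut2_aut h hi : aut2 h hi -> automorphism adj h.
Proof. intros [H1 [H2 H3]]. split; auto. exists hi; auto. Qed.
Lemma aut2_adj h hi a b : aut2 h hi -> adj a b -> adj (h a) (h b).
Proof. intros [_ [_ H]] Hab. apply (proj1 (H a b)); auto. Qed.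
Lemma aut2_inj h hi a b : aut2 h hi -> h a = h b -> a = b.
Proof. intros [H1 _] E. rewrite <- (H1 a), <- (H1 b), E. auto. Qed.

Definition ev (P : V -> Prop) (r : nat -> V) : Prop := exists m0, forall m, m0 <= m -> P (r m).

Lemma ray_img r h hi : ray adj r -> aut2 h hi -> ray adj (fun n => h (r n)).
Proof.
  intros [Ri Ra] Hh. split.
  - intros m n E. apply Ri. eapply aut2_inj; eauto.
  - intros n. eapply aut2_adj; eauto.
Qed.

Lemma ray_avoid r : ray adj r -> forall L : list V, exists N, forall n, N <= n -> ~ In (r n) L.
Proof.
  intros [Ri _] L. induction L as [|a L [N HN]].
  - exists 0. intros n _ [].
  - destruct (classic (exists k, r k = a)) as [[k Hk]|Hk].
    + exists (Nat.max N (S k)). intros n Hn [E|E].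
      * subst a. apply Ri in E. lia.
      * apply (HN n); auto. lia.
    + exists N. intros n Hn [E|E]. apply Hk; eauto. apply (HN n); auto.
Qed.

Lemma edge_side X (B : V -> Prop) a b : bnd X B -> adj a b -> ~ B a -> ~ B b -> (X a <-> X b).
Proof.
  intros Hb Hab Ha Hb'. apply (wk_side adj Hsym X B 1 a b Hb).
  econstructor; eauto. constructor. auto.
Qed.

Lemma ray_side r X (L : list V) : ray adj r -> bnd X (fun v => In v L) ->
  ev X r \/ ev (fun v => ~ X v /\ ~ In v L) r.
Proof.
  intros Hr Hb. destruct (ray_avoid r Hr L) as [N HN].
  assert (K : forall k, X (r N) <-> X (r (N + k))).
  { induction k. rewrite Nat.add_0_r; tauto. rewrite IHk.
    replace (N + S k) with (S (N + k)) by lia.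
    apply (edge_side X (fun v => In v L)); auto. apply Hr. apply HN; lia. apply HN; lia. }
  destruct (classic (X (r N))) as [H|H]; [left|right]; exists N; intros m Hm;
    replace m with (N + (m - N)) by lia; rewrite <- K; auto.
  split; auto. apply HN; lia.
Qed.

Lemma path_img p u v h hi : aut2 h hi -> path_from_to adj p u v -> path_from_to adj (map h p) (h u) (h v).
Proof.
  intros Hh [[Hne [Hnd Hc]] [Hhd Hl]]. split; [split; [|split]|split].
  - destruct p; simpl; congruence.
  - apply FinFun.Injective_map_NoDup; auto. intros a b; eapply aut2_inj; eauto.
  - clear -Hc Hh. induction p as [|a p IH]; simpl; auto. destruct p as [|b p]; simpl in *; auto.
    destruct Hc as [H1 H2]. split. eapply aut2_adj; eauto. apply IH; auto.
  - destruct p; simpl in *; congruence.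
  - rewrite <- map_rev. destruct (rev p); simpl in *; congruence.
Qed.

Lemma equiv_img r1 r2 h hi : aut2 h hi -> equiv_rays adj r1 r2 ->
  equiv_rays adj (fun n => h (r1 n)) (fun n => h (r2 n)).
Proof.
  intros Hh [P [HP HD]]. exists (fun i => map h (P i)). split.
  - intros i. destruct (HP i) as [m [n Hp]]. exists m, n. eapply path_img; eauto.
  - intros i j x Hij H1 H2. apply in_map_iff in H1, H2.
    destruct H1 as [a [Ea Ha]], H2 as [b [Eb Hb]]. subst x.
    apply (aut2_inj h hi) in Eb; auto. subst. eapply HD; eauto.
Qed.

Lemma equiv_img_inv r1 r2 h hi : aut2 h hi ->
  equiv_rays adj (fun n => h (r1 n)) (fun n => h (r2 n)) -> equiv_rays adj r1 r2.
Proof.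
  intros Hh E. apply aut2_inv in Hh as Hh'. apply (equiv_img _ _ _ _ Hh') in E.
  destruct Hh as [H1 _].
  replace r1 with (fun n => hi (h (r1 n))) by (apply functional_extensionality; auto).
  replace r2 with (fun n => hi (h (r2 n))) by (apply functional_extensionality; auto).
  auto.
Qed.

Lemma sep_core X (B : list V) rho sigma (P : nat -> list V) :
  bnd X (fun v => In v B) -> ev X rho -> ev (fun v => ~ X v) sigma ->
  (forall i j x, i <> j -> In x (P i) -> ~ In x (P j)) ->
  (forall i, exists m n k, wk (fun z => In z (P i)) k (rho m) (sigma n)) -> False.
Proof.
  intros Hb [m0 Hm0] [n0 Hn0] HD HW.
  set (L := B ++ map rho (seq 0 m0) ++ map sigma (seq 0 n0)).
  assert (exists i, forall x, In x (P i) -> ~ In x L) as [i Hi].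
  { apply NNPP; intro Hn.
    assert (S (length L) <= length L); [|lia].
    apply (php (fun i y => In y (P i) /\ In y L) L).
    - intros i _. apply NNPP; intro Hn2. apply Hn. exists i. intros x Hx HL. apply Hn2. eauto.
    - intros i j y [H1 _] [H2 _]. apply NNPP; intro Hij. eapply HD; eauto. }
  destruct (HW i) as [m [n [k W]]].
  assert (m0 <= m).
  { apply NNPP; intro Hm. apply (Hi (rho m)). exact (wk_start adj _ _ _ _ W).
    unfold L. apply in_or_app; right; apply in_or_app; left. apply in_map. apply in_seq. lia. }
  assert (n0 <= n).
  { apply NNPP; intro Hm. apply (Hi (sigma n)). exact (wk_end adj _ _ _ _ W).
    unfold L. apply in_or_app; right; apply in_or_app; right. apply in_map. apply in_seq. lia. }
  destruct (wk_cross adj _ _ _ _ _ _ Hb W (Hm0 m H) (Hn0 n H0)) as [z [Hz HzB]].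
  apply (Hi z Hz). unfold L. apply in_or_app; left; auto.
Qed.

Lemma sep X (B : list V) rho sigma :
  bnd X (fun v => In v B) -> ev X rho -> ev (fun v => ~ X v) sigma ->
  ~ equiv_rays adj rho sigma /\ ~ equiv_rays adj sigma rho.
Proof.
  intros Hb Hr Hs. split; intros [P [HP HD]]; apply (sep_core X B rho sigma P Hb Hr Hs HD);
  intros i; destruct (HP i) as [m [n Hp]]; apply path_wk in Hp; destruct Hp as [k W].
  - exists m, n, k. auto.
  - exists n, m, k. apply wk_rev; auto.
Qed.

Definition fin (X : V -> Prop) : Prop := exists l, forall x, X x -> In x l.

Lemma fin_union (X Y0 : V -> Prop) (E : list V) (R : V -> V -> Prop) :
  (forall x, X x -> Y0 x \/ exists e, In e E /\ R e x) -> fin Y0 -> (forall e, In e E -> fin (R e)) -> fin X.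
Proof.
  intros H [l0 Hl0] HR.
  assert (exists l, forall e x, In e E -> R e x -> In x l) as [l Hl].
  { clear H. induction E as [|a E IH].
    - exists []. intros e x [].
    - destruct IH as [l Hl]. intros; apply HR; right; auto.
      destruct (HR a (or_introl eq_refl)) as [la Hla].
      exists (la ++ l). intros e x [<-|He] Hx; apply in_or_app; eauto. }
  exists (l0 ++ l). intros x Hx. apply in_or_app. destruct (H x Hx) as [Y|[e [He Re]]]; eauto.
Qed.

Definition Xp (X : V -> Prop) (p : list V) (u : V) : Prop := X u /\ ~ In u p.
Definition Rp X p v y : Prop := exists n, wk (Xp X p) n v y.

Lemma rp_step X p v : forall n u y, wk (Xp X p) n u y ->
  Rp X (v :: p) u y \/ y = v \/ exists w, adj v w /\ Rp X (v :: p) w y.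
Proof.
  induction 1 as [y Py|n u z y Pu Auz W IH].
  - destruct (classic (y = v)) as [E|E]; auto. left. exists 0. constructor.
    destruct Py; split; auto. intros [Q1|Q1]; auto.
  - destruct IH as [[k Wk]|[E|Hw]]; auto.
    destruct (classic (u = v)) as [E|E].
    + subst u. right; right. exists z. split; auto. exists k; auto.
    + left. exists (S k). econstructor; eauto. destruct Pu as [Pu1 Pu2]; split; auto. intros [Q1|Q1]; auto.
Qed.

Lemma fin_nonempty (X : V -> Prop) : ~ fin X -> exists x, X x.
Proof. intros H. apply NNPP; intro Hn. apply H. exists []. intros x Hx. apply Hn; eauto. Qed.

Lemma fin_mono (X Y : V -> Prop) : (forall x, X x -> Y x) -> fin Y -> fin X.
Proof. intros H [l Hl]. exists l; auto. Qed.

Definition Inv X (s : list V * V) : Prop :=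
  X (snd s) /\ ~ In (snd s) (fst s) /\ ~ fin (Rp X (fst s) (snd s)).

Lemma inv_step X s : Inv X s -> exists w, adj (snd s) w /\ Inv X (snd s :: fst s, w).
Proof.
  destruct s as [p v]. intros [Xv [Nv Inf]]. simpl in *.
  assert (~ fin (fun _ => False) -> False) by (intro H; apply H; exists []; tauto).
  destruct (classic (exists w, In w (nbrs v) /\ ~ fin (fun y => adj v w /\ Rp X (v :: p) w y)))
    as [[w [Hw Hinf]]|Hno].
  - destruct (fin_nonempty _ Hinf) as [y [Avw [n Wn]]].
    exists w. split; auto. split; [|split].
    + apply (wk_start adj _ _ _ _ Wn).
    + apply (wk_start adj _ _ _ _ Wn).
    + intro F. apply Hinf. eapply fin_mono; [|exact F]. simpl. tauto.
  - exfalso. apply Inf. apply (fin_union _ (fun y => y = v) (nbrs v) (fun w y => adj v w /\ Rp X (v :: p) w y)).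
    + intros y [n Wn]. destruct (rp_step X p v n v y Wn) as [[k Wk]|[E|[w [Avw Rw]]]]; auto.
      * exfalso. apply (wk_start adj _ _ _ _ Wk). left; auto.
      * right. exists w. split; auto. apply nbrs_spec; auto.
    + exists [v]. intros x ->. left; auto.
    + intros e He. apply NNPP; intro Hn. apply Hno. eauto.
Qed.

Lemma entry X (B : list V) z : bnd X (fun v => In v B) -> forall n x, wk (fun _ => True) n x z -> X z -> X x ->
  exists e, (z = e \/ In e (concat (map nbrs B))) /\ Rp X [] e x.
Proof.
  intros Hb n x W Xz. induction W as [x _|n x y z' _ Axy W IH]; intros Hx.
    - exists x. split. left; auto. exists 0. constructor. split; auto.
    - destruct (classic (X y)) as [Xy|Xy].
      + destruct (IH Xz Xy) as [e [He [k Wk]]]. exists e. split; auto. exists (S k).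
        eapply wk_snoc; eauto. split; auto.
      + exists x. split. right. apply in_concat. exists (nbrs y). split.
        apply in_map. eapply Hb; eauto. apply nbrs_spec; auto.
        exists 0. constructor. split; auto.
Qed.

Lemma koenig X (B : list V) : bnd X (fun v => In v B) -> ~ fin X ->
  exists r, ray adj r /\ forall n, X (r n).
Proof.
  intros Hb Hinf.
  destruct (fin_nonempty _ Hinf) as [z Xz].
  set (E := z :: concat (map nbrs B)).
  assert (Hent : forall x, X x -> exists e, In e E /\ Rp X [] e x).
  { intros x Hx. destruct (conn_wk' adj Hconn x z) as [n W].
    destruct (entry X B z Hb n x W Xz Hx) as [e [He R]]. exists e; split; auto.
    }
  assert (exists e, Inv X ([], e)) as [e0 He0].
  { apply NNPP; intro Hn. apply Hinf.
    apply (fin_union _ (fun _ => False) E (Rp X [])).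
    - intros x Hx. right. auto.
    - exists []. tauto.
    - intros e He. apply NNPP; intro Hf. apply Hn. exists e.
      destruct (fin_nonempty _ Hf) as [y [n Wn]]. split; [|split].
      + apply (wk_start adj _ _ _ _ Wn).
      + simpl; auto.
      + auto. }
  set (St := {s : list V * V | Inv X s}).
  assert (Hstep : forall s : St, {s' : St | fst (proj1_sig s') = snd (proj1_sig s) :: fst (proj1_sig s)
                                   /\ adj (snd (proj1_sig s)) (snd (proj1_sig s'))}).
  { intros [s Hs]. apply constructive_indefinite_description.
    destruct (inv_step X s Hs) as [w [Hw Hi]].
    exists (exist _ (snd s :: fst s, w) Hi). simpl. auto. }
  set (nx := fun s => proj1_sig (Hstep s)).
  set (s0 := exist (Inv X) ([], e0) He0 : St).
  set (sq := fun n => Nat.iter n nx s0).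
  set (r := fun n => snd (proj1_sig (sq n))).
  assert (Hsq : forall n, fst (proj1_sig (sq (S n))) = r n :: fst (proj1_sig (sq n))).
  { intros n. change (sq (S n)) with (proj1_sig (Hstep (sq n))).
    destruct (Hstep (sq n)) as [s' [H1 H2]]. simpl. exact H1. }
  assert (Hprev : forall m n, m < n -> In (r m) (fst (proj1_sig (sq n)))).
  { intros m n Hmn. induction Hmn.
    - rewrite Hsq. left; auto.
    - rewrite Hsq. right; auto. }
  exists r. split; [split|].
  - intros m n Emn. destruct (Nat.lt_trichotomy m n) as [h|[h|h]]; auto; exfalso.
    + apply Hprev in h. rewrite Emn in h. destruct (proj2_sig (sq n)) as [_ [H _]]. auto.
    + apply Hprev in h. rewrite <- Emn in h. destruct (proj2_sig (sq m)) as [_ [H _]]. auto.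
  - intros n. unfold r. change (sq (S n)) with (proj1_sig (Hstep (sq n))).
    destruct (Hstep (sq n)) as [s' [H1 H2]]. exact H2.
  - intros n. unfold r. destruct (proj2_sig (sq n)) as [H _]. auto.
Qed.

End G2.

Import ListNotations.

Section G3.
Context {V : Type} (adj : V -> V -> Prop).
Hypothesis Hsym : forall x y, adj x y -> adj y x.
Hypothesis Hirr : forall x, ~ adj x x.
Hypothesis Hlf : locally_finite adj.
Hypothesis Hconn : connected adj.

Notation wk := (wk adj).
Notation nbrs := (nbrs adj Hlf).
Notation bnd := (bnd adj).
Notation aut2 := (aut2 adj).
Notation fin := (@fin V).

Variables r1 r2 : nat -> V.
Hypothesis Hr1 : ray adj r1.
Hypothesis Hr2 : ray adj r2.
Hypothesis Hends : forall r, ray adj r -> equiv_rays adj r r1 \/ equiv_rays adj r r2.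

Lemma key X (B : list V) : bnd X (fun v => In v B) -> ev (fun v => ~ X v) r1 -> ev (fun v => ~ X v) r2 -> fin X.
Proof.
  intros Hb H1 H2. apply NNPP; intro Hinf.
  destruct (koenig adj Hsym Hlf Hconn X B Hb Hinf) as [R [HR HX]].
  assert (ev X R) by (exists 0; auto).
  destruct (Hends R HR) as [E|E].
  - destruct (sep adj Hsym X B R r1 Hb H H1) as [N1 _]; auto.
  - destruct (sep adj Hsym X B R r2 Hb H H2) as [N1 _]; auto.
Qed.

Definition cutp (Fk : list V) (Ak : V -> Prop) : Prop :=
  (forall v, Ak v -> ~ In v Fk) /\ bnd Ak (fun v => In v Fk).
Definition Bk (Fk : list V) (Ak : V -> Prop) (v : V) : Prop := ~ Ak v /\ ~ In v Fk.

Lemma cut_compl Fk Ak : cutp Fk Ak -> cutp Fk (Bk Fk Ak).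
Proof.
  intros [H1 H2]. split. intros v [_ H]; auto.
  intros a b [Na Fa] Hab Hb. apply NNPP; intro Fb. apply Hb. split; auto.
  intro Ab. apply Fa. eapply H2; eauto.
Qed.

Lemma in_map_aut h hi (L : list V) v : aut2 h hi -> (In v (map h L) <-> In (hi v) L).
Proof.
  intros [H1 [H2 _]]. rewrite in_map_iff. split.
  - intros [x [<- Hx]]. rewrite H1; auto.
  - intros H. exists (hi v). auto.
Qed.

Lemma cut_img Fk Ak h hi : aut2 h hi -> cutp Fk Ak -> cutp (map h Fk) (fun v => Ak (hi v)).
Proof.
  intros Hh [H1 H2]. split.
  - intros v Hv. rewrite (in_map_aut h hi); auto.
  - intros a b Ha Hab Hb. rewrite (in_map_aut h hi); auto. eapply H2; eauto.
    apply aut2_inv in Hh. eapply aut2_adj; eauto.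
Qed.

Lemma ev_mono (P Q : V -> Prop) r : (forall v, P v -> Q v) -> ev P r -> ev Q r.
Proof. intros H [m Hm]. exists m. auto. Qed.

Definition DS (Fk : list V) (Ak : V -> Prop) : Prop :=
  forall w wi, aut2 w wi ->
    ~ (ev Ak (fun n => w (r1 n)) /\ ev Ak (fun n => w (r2 n))) /\
    ~ (ev (Bk Fk Ak) (fun n => w (r1 n)) /\ ev (Bk Fk Ak) (fun n => w (r2 n))).

Lemma DS_img Fk Ak h hi : aut2 h hi -> DS Fk Ak -> DS (map h Fk) (fun v => Ak (hi v)).
Proof.
  intros Hh HD w wi Hw. 
  destruct (HD (fun x => hi (w x)) (fun x => wi (h x))) as [D1 D2].
  { apply aut2_comp; auto. apply aut2_inv; auto. }
  split; intros [E1 E2].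
  - apply D1. split; auto.
  - apply D2. destruct E1 as [m1 Hm1], E2 as [m2 Hm2].
    split; [exists m1|exists m2]; intros m Hm; [destruct (Hm1 m Hm) as [Q1 Q2]|destruct (Hm2 m Hm) as [Q1 Q2]];
    split; auto; rewrite <- (in_map_aut h hi); auto.
Qed.

Lemma two_sides_gen (Y Z : V -> Prop) ra rb :
  (forall r, ray adj r -> ev Y r \/ ev Z r) ->
  (forall rho sigma, ev Y rho -> ev Z sigma -> ~ equiv_rays adj rho sigma /\ ~ equiv_rays adj sigma rho) ->
  ray adj ra -> ray adj rb -> ev Y ra -> ev Z rb ->
  (forall r, ray adj r -> equiv_rays adj r ra \/ equiv_rays adj r rb) ->
  forall w wi, aut2 w wi -> ~ (ev Y (fun n => w (ra n)) /\ ev Y (fun n => w (rb n))).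
Proof.
  intros Hside Hsep Ha Hb Ya Zb He w wi Hw [E1 E2].
  assert (Ea : equiv_rays adj (fun n => w (ra n)) ra).
  { destruct (He _ (ray_img adj _ _ _ Ha Hw)) as [E|E]; auto. exfalso. destruct (Hsep _ _ E1 Zb) as [N _]. auto. }
  assert (Eb : equiv_rays adj (fun n => w (rb n)) ra).
  { destruct (He _ (ray_img adj _ _ _ Hb Hw)) as [E|E]; auto. exfalso. destruct (Hsep _ _ E2 Zb) as [N _]. auto. }
  apply aut2_inv in Hw as Hw'.
  assert (Ea' : equiv_rays adj ra (fun n => wi (ra n))).
  { apply (equiv_img_inv adj _ _ w wi Hw). destruct Hw as [_ [H2 _]].
    replace (fun n => w (wi (ra n))) with ra by (apply functional_extensionality; auto). auto. }
  assert (Eb' : equiv_rays adj rb (fun n => wi (ra n))).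
  { apply (equiv_img_inv adj _ _ w wi Hw). destruct Hw as [_ [H2 _]].
    replace (fun n => w (wi (ra n))) with ra by (apply functional_extensionality; auto). auto. }
  destruct (Hside _ (ray_img adj _ _ _ Ha Hw')) as [Y'|Z'].
  - destruct (Hsep _ _ Y' Zb) as [_ N]. auto.
  - destruct (Hsep _ _ Ya Z') as [N _]. auto.
Qed.

Fixpoint ball (L : list V) (r : nat) : list V :=
  match r with 0 => L | S r => ball L r ++ concat (map nbrs (ball L r)) end.

Lemma ball_mono L r x : In x (ball L r) -> In x (ball L (S r)).
Proof. intros H. simpl. apply in_or_app; auto. Qed.
Lemma ball_mono_le L r r' x : r <= r' -> In x (ball L r) -> In x (ball L r').
Proof. induction 1; auto. intros; apply ball_mono; auto. Qed.
Lemma ball_step L r x y : In x (ball L r) -> adj x y -> In y (ball L (S r)).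
Proof.
  intros Hx Hxy. simpl. apply in_or_app; right. apply in_concat. exists (nbrs x). split.
  apply in_map; auto. apply nbrs_spec; auto.
Qed.
Lemma ball_wk L P n x y : wk P n x y -> forall k, In x (ball L k) -> In y (ball L (k + n)).
Proof.
  induction 1 as [x _|n x y z _ Axy W IH]; intros k Hx.
  - rewrite Nat.add_0_r; auto.
  - replace (k + S n) with (S k + n) by lia. apply IH. eapply ball_step; eauto.
Qed.

Variable F' : list V.
Variable R2 : nat.
Variable f0 : V.
Hypothesis Hf0 : In f0 F'.
Hypothesis Hlink : forall x y, In x F' -> In y F' -> exists k, k <= R2 /\ wk (fun v => In v F') k x y.
Variable S : list V.
Hypothesis HSF : forall s, In s S -> In s F'.
Hypothesis HQT : forall v, exists s f, In s S /\ automorphism adj f /\ f s = v.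
Variable C1 : V -> Prop.
Hypothesis HC1b : bnd C1 (fun v => In v F').
Hypothesis HC1d : forall v, C1 v -> ~ In v F'.
Definition A v := ~ In v F' /\ ~ C1 v.
Hypothesis Hr1C : ev C1 r1.
Hypothesis Hr2A : ev A r2.

Lemma cutA : cutp F' A.
Proof.
  split. intros v [H _]; auto.
  intros a b [Fa Ca] Hab Hb. apply NNPP; intro Fb. apply Hb. split; auto.
  intro Cb. apply Ca. apply NNPP; intro Ca'. apply Fa. eapply HC1b; eauto.
Qed.
Lemma cutC1 : cutp F' C1.
Proof. split; auto. Qed.
Lemma BkA v : Bk F' A v <-> C1 v.
Proof.
  unfold Bk, A. split.
  - intros [H1 H2]. apply NNPP; intro H. apply H1. auto.
  - intros H. split; auto. intros [_ H']; auto.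
Qed.
Lemma BkC1 v : Bk F' C1 v <-> A v.
Proof. unfold Bk, A. tauto. Qed.

Lemma side2 r : ray adj r -> ev C1 r \/ ev A r.
Proof.
  intros Hr. destruct (ray_side adj Hsym r A F' Hr (proj2 cutA)) as [H|H]; auto.
  left. eapply ev_mono; [|eauto]. intros v Hv. apply BkA. auto.
Qed.

Lemma sepCA rho sigma : ev C1 rho -> ev A sigma -> ~ equiv_rays adj rho sigma /\ ~ equiv_rays adj sigma rho.
Proof.
  intros H1 H2. apply (sep adj Hsym A F' sigma rho (proj2 cutA)) in H2.
  - tauto.
  - eapply ev_mono; [|eauto]. intros v Hv [_ H]; auto.
Qed.

Lemma DS_A : DS F' A.
Proof.
  intros w wi Hw. split.
  - intros [E1 E2]. apply (two_sides_gen A C1 r2 r1) with w wi; auto.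
    + intros r Hr. destruct (side2 r Hr); auto.
    + intros rho sigma H1 H2. apply (sepCA sigma rho) in H1; auto. tauto.
    + intros r Hr. destruct (Hends r Hr); auto.
  - intros [E1 E2]. apply (two_sides_gen C1 A r1 r2 side2 sepCA Hr1 Hr2 Hr1C Hr2A Hends w wi Hw).
    split; (eapply ev_mono; [|eauto]); intros v Hv; apply BkA; auto.
Qed.

Lemma DS_C1 : DS F' C1.
Proof.
  intros w wi Hw. destruct (DS_A w wi Hw) as [D1 D2]. split; intros [E1 E2].
  - apply D2. split; (eapply ev_mono; [|eauto]); intros v Hv; apply BkA; auto.
  - apply D1. split; (eapply ev_mono; [|eauto]); intros v Hv; apply BkC1; auto.
Qed.


Lemma wk_aut u ui (P Q : V -> Prop) n x y : aut2 u ui -> (forall v, P v -> Q (u v)) -> wk P n x y -> wk Q n (u x) (u y).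
Proof. intros Hu HPQ W. apply (wk_img adj Hsym P Q u n x y); auto. intros; eapply aut2_adj; eauto. Qed.

Lemma c1_link c : C1 c -> exists n a b, wk C1 n c a /\ adj a b /\ In b F'.
Proof.
  intros Hc. destruct (conn_wk' adj Hconn c f0) as [n W].
  destruct (wk_exit adj C1 n c f0 W Hc (fun H' => HC1d f0 H' Hf0)) as [n' [a [b [W' [Hab Hb]]]]].
  exists n', a, b. repeat split; auto. exact (HC1b a b (wk_end adj _ _ _ _ W') Hab Hb).
Qed.

Lemma c1_side_img u ui Fk Ak : aut2 u ui -> bnd Ak (fun v => In v Fk) ->
  (forall c, C1 c -> ~ In (u c) Fk) -> (forall f, In f F' -> ~ In (u f) Fk) ->
  (forall f, In f F' -> Ak (u f)) -> forall c, C1 c -> Ak (u c).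
Proof.
  intros Hu Hb H1 H2 H3 c Hc. destruct (c1_link c Hc) as [n [a [b [W [Hab Hb']]]]].
  assert (W' : wk (fun v => ~ In v Fk) n (u c) (u a)).
  { exact (wk_aut u ui _ _ n c a Hu H1 W). }
  apply (wk_side adj Hsym Ak _ n _ _ Hb W').
  apply (edge_side adj Hsym Ak (fun v => In v Fk) (u a) (u b)); auto.
  eapply aut2_adj; eauto. apply H1. exact (wk_end adj _ _ _ _ W).
Qed.

Lemma link_side_img u ui Fk Ak f1 f2 : aut2 u ui -> bnd Ak (fun v => In v Fk) ->
  (forall f, In f F' -> ~ In (u f) Fk) -> In f1 F' -> In f2 F' -> Ak (u f1) -> Ak (u f2).
Proof.
  intros Hu Hb H1 I1 I2 A1. destruct (Hlink f1 f2 I1 I2) as [k [_ W]].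
  assert (W' : wk (fun v => ~ In v Fk) k (u f1) (u f2)).
  { exact (wk_aut u ui _ _ k f1 f2 Hu H1 W). }
  apply (wk_side adj Hsym Ak _ k _ _ Hb W'). auto.
Qed.

Lemma far (L K : list V) (Y : V -> Prop) : bnd Y (fun v => In v K) -> (forall v, In v K -> In v L) ->
  ev Y r2 -> exists h hi, aut2 h hi /\ (forall f, In f F' -> ~ In (h f) L) /\ (forall f, In f F' -> Y (h f)).
Proof.
  intros Hb HKL [m0 Hm0]. destruct (ray_avoid adj r2 Hr2 (ball L R2)) as [N1 HN1].
  set (n := Nat.max N1 m0).
  destruct (HQT (r2 n)) as [s [h [Hs [Hh Ehs]]]]. destruct (aut_of adj h Hh) as [hi Hhi].
  assert (G1 : forall f, In f F' -> ~ In (h f) L).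
  { intros f Hf HL. destruct (Hlink f s Hf (HSF s Hs)) as [k [Hk W]].
    assert (W' : wk (fun _ => True) k (h f) (h s)).
    { exact (wk_aut h hi _ (fun _ => True) k f s Hhi (fun _ _ => I) W). }
    apply (HN1 n). unfold n; lia. rewrite <- Ehs.
    apply (ball_mono_le L k R2); auto. apply (ball_wk L _ k _ _ W' 0). auto. }
  exists h, hi. split; [|split]; auto.
  intros f Hf. destruct (Hlink s f (HSF s Hs) Hf) as [k [Hk W]].
  assert (W' : wk (fun v => ~ In v K) k (h s) (h f)).
  { apply (wk_aut h hi (fun v => In v F') (fun v => ~ In v K) k s f Hhi); [|exact W]. intros v Hv HK; apply (G1 v Hv); auto. }
  apply (wk_side adj Hsym Y _ k _ _ Hb W'). rewrite Ehs. apply Hm0. unfold n; lia.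
Qed.

Definition trans_ok Fk Ak t ti : Prop :=
  cutp Fk Ak /\ DS Fk Ak /\ (exists f, In f Fk) /\ aut2 t ti /\
  (forall v, Ak v -> Ak (t v)) /\ (forall f, In f Fk -> Ak (t f)).

Lemma notin_map g gi (L M : list V) : aut2 g gi -> (forall f, In f L -> ~ In (g f) M) ->
  forall v, In v M -> ~ In v (map g L).
Proof.
  intros Hg H v Hv Hin. apply in_map_iff in Hin. destruct Hin as [f [<- Hf]]. eapply H; eauto.
Qed.

Lemma nonflip_ok g gi : aut2 g gi -> (forall f, In f F' -> ~ In (g f) F') -> (forall f, In f F' -> A (g f)) ->
  (forall f, In f F' -> C1 (gi f)) -> trans_ok F' A g gi.
Proof.
  intros Hg G1 G2 NF.
  assert (HC : forall c, C1 c -> C1 (gi c)).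
  { apply (c1_side_img (fun x => x) (fun x => x) (map g F') (fun v => C1 (gi v)) (aut2_id adj)).
    - apply (cut_img F' C1 g gi Hg cutC1).
    - intros c Hc Hin. apply in_map_iff in Hin. destruct Hin as [f [<- Hf]]. destruct (G2 f Hf); auto.
    - apply (notin_map g gi F' F' Hg G1).
    - auto. }
  split; [apply cutA|split; [apply DS_A|split; [exists f0; auto|split; [auto|split]]]].
  - intros v [Fv Cv]. split.
    + intros Hin. apply Cv. rewrite <- (proj1 Hg v). apply NF; auto.
    + intros Hc. apply Cv. rewrite <- (proj1 Hg v). apply HC; auto.
  - auto.
Qed.

Lemma classify g gi : aut2 g gi -> (forall f, In f F' -> ~ In (g f) F') -> (forall f, In f F' -> A (g f)) ->
  (forall f, In f F' -> C1 (gi f)) \/ (forall f, In f F' -> A (gi f)).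
Proof.
  intros Hg G1 G2.
  assert (Hb : bnd (fun v => A (gi v)) (fun v => In v (map g F'))) by apply (cut_img F' A g gi Hg cutA).
  assert (Hn := notin_map g gi F' F' Hg G1).
  destruct (classic (A (gi f0))) as [H|H]; [right|left]; intros f Hf.
  - apply (link_side_img (fun x => x) (fun x => x) _ _ f0 f (aut2_id adj) Hb); auto.
  - assert (~ A (gi f)).
    { intro H'. apply H. apply (link_side_img (fun x => x) (fun x => x) _ _ f f0 (aut2_id adj) Hb); auto. }
    apply (BkA (gi f)). split; auto. rewrite <- (in_map_aut g gi); auto.
Qed.

Lemma trans_exists : exists Fk Ak t ti, trans_ok Fk Ak t ti.
Proof.
  destruct (far F' F' A (proj2 cutA) (fun v H => H) Hr2A) as [g [gi [Hg [G1 G2]]]].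
  destruct (classify g gi Hg G1 G2) as [NF|FL].
  { exists F', A, g, gi. apply nonflip_ok; auto. }
  assert (Hn := notin_map g gi F' F' Hg G1).
  assert (HbA : bnd (fun v => A (gi v)) (fun v => In v (map g F'))) by apply (cut_img F' A g gi Hg cutA).
  assert (HbC : bnd (fun v => C1 (gi v)) (fun v => In v (map g F'))) by apply (cut_img F' C1 g gi Hg cutC1).
  assert (Ha : forall c, C1 c -> A (gi c)).
  { apply (c1_side_img (fun x => x) (fun x => x) (map g F') (fun v => A (gi v)) (aut2_id adj) HbA); auto.
    intros c Hc Hin. apply in_map_iff in Hin. destruct Hin as [f [<- Hf]]. destruct (G2 f Hf); auto. }
  assert (Hb : forall v, C1 (gi v) -> A v).
  { intros v Hv. split.
    - intros Hin. destruct (FL v Hin). auto.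
    - intros Hc. destruct (Ha v Hc). auto. }
  assert (Hgi : aut2 gi g) by (apply aut2_inv; auto).
  assert (Hc2 : ev (fun v => C1 (gi v)) r2).
  { destruct (ray_side adj Hsym r2 _ (map g F') Hr2 HbC) as [H|H]; auto. exfalso.
    apply (proj1 (DS_A gi g Hgi)). split.
    - destruct Hr1C as [m0 Hm]. exists m0. intros m Hm'. apply Ha; auto.
    - destruct H as [m0 Hm]. exists m0. intros m Hm'. destruct (Hm m Hm') as [Q1 Q2].
      apply BkC1. split; auto. rewrite <- (in_map_aut g gi); auto. }
  destruct (far (F' ++ map g F') (map g F') (fun v => C1 (gi v)) HbC
              (fun v H => in_or_app _ _ _ (or_intror H)) Hc2) as [g' [g'i [Hg' [G1' G2']]]].
  assert (G1'' : forall f, In f F' -> ~ In (g' f) F') by (intros f Hf H; apply (G1' f Hf); apply in_or_app; auto).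
  assert (G2'' : forall f, In f F' -> A (g' f)) by (intros f Hf; apply Hb; auto).
  destruct (classify g' g'i Hg' G1'' G2'') as [NF'|FL'].
  { exists F', A, g', g'i. apply nonflip_ok; auto. }
  exists (map g F'), (fun v => C1 (gi v)), (fun x => g' (gi x)), (fun x => g (g'i x)).
  split; [apply (cut_img F' C1 g gi Hg cutC1)|split; [apply (DS_img _ _ g gi Hg DS_C1)|split; [|split; [|split]]]].
  - exists (g f0). apply in_map; auto.
  - apply aut2_comp; auto.
  -
    assert (HbA' : bnd (fun v => A (g'i v)) (fun v => In v (map g' F'))) by apply (cut_img F' A g' g'i Hg' cutA).
    assert (Hn' : forall f, In f F' -> ~ In (g f) (map g' F')).
    { intros f Hf Hin. apply in_map_iff in Hin. destruct Hin as [f2 [E Hf2]].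
      apply (G1' f2 Hf2). apply in_or_app; right. rewrite E. apply in_map; auto. }
    assert (HgA : forall f, In f F' -> A (g'i (g f))).
    {
      destruct (conn_wk' adj Hconn f0 (g f0)) as [n W].
      assert (~ A (gi (g f0))) by (rewrite (proj1 Hg); intros [Q _]; auto).
      destruct (wk_exit adj (fun v => A (gi v)) n f0 (g f0) W (FL f0 Hf0) H) as [n' [a [b [W' [Hab Hb']]]]].
      assert (Ib : In b (map g F')) by exact (HbA a b (wk_end adj _ _ _ _ W') Hab Hb').
      assert (Hav : forall v, A (gi v) -> ~ In v (map g' F')).
      { intros v Hv Hin. apply in_map_iff in Hin. destruct Hin as [f [<- Hf]].
        destruct Hv as [_ Q]. apply Q. apply G2'; auto. }
      assert (W'' : wk (fun v => ~ In v (map g' F')) n' f0 a) by (eapply wk_mono; [|exact W']; auto).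
      assert (Aa : A (g'i a)).
      { apply (wk_side adj Hsym _ _ n' _ _ HbA' W''). apply FL'; auto. }
      assert (Ab : A (g'i b)).
      { apply (edge_side adj Hsym (fun v => A (g'i v)) (fun v => In v (map g' F')) a b HbA' Hab); auto.
        exact (wk_end adj _ _ _ _ W''). apply in_map_iff in Ib. destruct Ib as [f [<- Hf]]. auto. }
      apply in_map_iff in Ib. destruct Ib as [f1 [<- Hf1]].
      intros f Hf. apply (link_side_img g gi _ _ f1 f Hg HbA' Hn' Hf1 Hf Ab). }
    intros v Hv. apply (c1_side_img g' g'i (map g F') (fun v => C1 (gi v)) Hg' HbC); auto.
    + intros c Hc Hin. apply in_map_iff in Hin. destruct Hin as [f [E Hf]].
      destruct (HgA f Hf) as [_ Q]. apply Q. rewrite E. rewrite (proj1 Hg'). auto.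
    + intros f Hf Hin. apply (G1' f Hf). apply in_or_app; auto.
  - intros f Hf. apply in_map_iff in Hf. destruct Hf as [f1 [<- Hf1]]. rewrite (proj1 Hg). auto.
Qed.

End G3.

Import ListNotations.
Open Scope Z_scope.

Section TP.
Context {V : Type} (adj : V -> V -> Prop).
Variables t ti : V -> V.
Hypothesis Ht : aut2 adj t ti.

Definition tpow (z : Z) (v : V) : V :=
  if (0 <=? z) then Nat.iter (Z.to_nat z) t v else Nat.iter (Z.to_nat (- z)) ti v.

Lemma tpow_0 v : tpow 0 v = v.
Proof. reflexivity. Qed.

Lemma tpow_succ z v : tpow (z + 1) v = t (tpow z v).
Proof.
  destruct Ht as [H1 [H2 _]]. unfold tpow.
  destruct (Z_le_gt_dec 0 z).
  - replace (0 <=? z + 1) with true by (symmetry; apply Z.leb_le; lia).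
    replace (0 <=? z) with true by (symmetry; apply Z.leb_le; lia).
    replace (Z.to_nat (z + 1)) with (S (Z.to_nat z)) by lia. reflexivity.
  - replace (0 <=? z) with false by (symmetry; apply Z.leb_gt; lia).
    destruct (Z.eq_dec z (-1)) as [->|Hz].
    + simpl. rewrite H2. auto.
    + replace (0 <=? z + 1) with false by (symmetry; apply Z.leb_gt; lia).
      replace (Z.to_nat (- z)) with (S (Z.to_nat (- (z + 1)))) by lia. simpl. rewrite H2. auto.
Qed.

Lemma tpow_pred z v : tpow (z - 1) v = ti (tpow z v).
Proof.
  destruct Ht as [H1 [H2 _]].
  replace (tpow z v) with (tpow (z - 1 + 1) v) by (f_equal; lia). rewrite tpow_succ, H1. auto.
Qed.

Lemma tpow_add a : forall b v, tpow (a + b) v = tpow a (tpow b v).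
Proof.
  induction a using Z.peano_ind; intros b v.
  - reflexivity.
  - replace (Z.succ a + b) with (a + b + 1) by lia. rewrite tpow_succ, IHa.
    replace (Z.succ a) with (a + 1) by lia. rewrite tpow_succ. auto.
  - replace (Z.pred a + b) with (a + b - 1) by lia. rewrite tpow_pred, IHa.
    replace (Z.pred a) with (a - 1) by lia. rewrite tpow_pred. auto.
Qed.

Lemma tpow_1 v : tpow 1 v = t v.
Proof. apply (tpow_succ 0). Qed.

Lemma tpow_inv z v : tpow (- z) (tpow z v) = v.
Proof. rewrite <- tpow_add. replace (- z + z) with 0 by lia. auto. Qed.

Lemma tpow_adj z : forall x y, adj x y -> adj (tpow z x) (tpow z y).
Proof.
  destruct Ht as [H1 [H2 H3]].
  induction z using Z.peano_ind; intros x y H.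
  - exact H.
  - replace (Z.succ z) with (z + 1) by lia. rewrite !tpow_succ. apply (proj1 (H3 _ _)). auto.
  - replace (Z.pred z) with (z - 1) by lia. rewrite !tpow_pred. apply (proj2 (H3 _ _)). rewrite !H2. auto.
Qed.

Lemma tpow_aut z : aut2 adj (tpow z) (tpow (- z)).
Proof.
  split; [|split].
  - apply tpow_inv.
  - intros x. replace z with (- - z) at 1 by lia. apply tpow_inv.
  - intros x y. split. apply tpow_adj. intros H. apply (tpow_adj (- z)) in H. rewrite !tpow_inv in H. auto.
Qed.

Lemma tpow_nat (k : nat) v : tpow (Z.of_nat k) v = Nat.iter k t v.
Proof. unfold tpow. replace (0 <=? Z.of_nat k) with true by (symmetry; apply Z.leb_le; lia). rewrite Nat2Z.id. auto. Qed.

End TP.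

Section LV.
Context {V : Type} (adj : V -> V -> Prop).
Hypothesis Hsym : forall x y, adj x y -> adj y x.
Hypothesis Hlf : locally_finite adj.
Hypothesis Hconn : connected adj.
Variables r1 r2 : nat -> V.
Hypothesis Hr1 : ray adj r1.
Hypothesis Hr2 : ray adj r2.
Hypothesis Hends : forall r, ray adj r -> equiv_rays adj r r1 \/ equiv_rays adj r r2.
Variable Fk : list V.
Variable Ak : V -> Prop.
Variables t ti : V -> V.
Hypothesis Hok : trans_ok adj r1 r2 Fk Ak t ti.

Let Ht : aut2 adj t ti := proj1 (proj2 (proj2 (proj2 Hok))).
Let Hcut := proj1 Hok.
Let HDS := proj1 (proj2 Hok).
Let Hne := proj1 (proj2 (proj2 Hok)).
Let H3 : forall v, Ak v -> Ak (t v) := proj1 (proj2 (proj2 (proj2 (proj2 Hok)))).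
Let H4 : forall f, In f Fk -> Ak (t f) := proj2 (proj2 (proj2 (proj2 (proj2 Hok)))).

Notation tp := (tpow t ti).
Definition Pj (j : Z) (v : V) : Prop := Ak (tp (- j) v).

Lemma Pj_nest j v : Pj (j + 1) v -> Pj j v.
Proof.
  unfold Pj. intros H. replace (- j) with (1 + - (j + 1)) by lia.
  rewrite (tpow_add adj t ti Ht), (tpow_1 adj t ti Ht). auto.
Qed.

Lemma Pj_le (k : nat) : forall j v, Pj (j + Z.of_nat k) v -> Pj j v.
Proof.
  induction k; intros j v H. rewrite Z.add_0_r in H; auto.
  apply IHk. apply Pj_nest. replace (j + Z.of_nat k + 1) with (j + Z.of_nat (S k)) by lia. auto.
Qed.

Lemma Pj_le' j j' v : j' <= j -> Pj j v -> Pj j' v.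
Proof. intros Hj H. apply (Pj_le (Z.to_nat (j - j'))). replace (j' + Z.of_nat (Z.to_nat (j - j'))) with j by lia. auto. Qed.

Lemma Pj_shift j v : Pj j (t v) <-> Pj (j - 1) v.
Proof.
  unfold Pj. rewrite <- (tpow_1 adj t ti Ht v), <- (tpow_add adj t ti Ht).
  replace (- j + 1) with (- (j - 1)) by lia. tauto.
Qed.

Lemma Pj_bnd j x y : Pj j x -> adj x y -> ~ Pj j y -> In (tp (- j) y) Fk.
Proof. intros Hx Hxy Hy. apply (proj2 Hcut (tp (- j) x)); auto. apply (tpow_adj adj t ti Ht); auto. Qed.

Lemma iter_in (k : nat) f : In f Fk -> Ak (Nat.iter (S k) t f).
Proof. induction k; intros Hf. apply H4; auto. simpl in *. apply H3. apply IHk; auto. Qed.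

Lemma pos_in (z : Z) f : 1 <= z -> In f Fk -> Ak (tp z f).
Proof.
  intros Hz Hf. replace z with (Z.of_nat (S (Z.to_nat (z - 1)))) by lia.
  rewrite tpow_nat. apply iter_in; auto.
Qed.

Lemma Pj_disj i j y : In (tp (- i) y) Fk -> In (tp (- j) y) Fk -> i = j.
Proof.
  intros Hi Hj. destruct (Z.lt_trichotomy i j) as [h|[h|h]]; auto; exfalso.
  - apply (proj1 Hcut (tp (- i) y)); auto.
    replace (tp (- i) y) with (tp (j - i) (tp (- j) y)). apply pos_in; auto; lia.
    rewrite <- (tpow_add adj t ti Ht). f_equal. lia.
  - apply (proj1 Hcut (tp (- j) y)); auto.
    replace (tp (- j) y) with (tp (i - j) (tp (- i) y)). apply pos_in; auto; lia.
    rewrite <- (tpow_add adj t ti Ht). f_equal. lia.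
Qed.

Lemma Pj_Fk f j : In f Fk -> (Pj j f <-> j <= -1).
Proof.
  intros Hf. unfold Pj. split.
  - intros H. apply Z.nlt_ge. intros Hj. apply (proj1 Hcut f); auto.
    apply (Pj_le' j 0 f); [lia|auto].
  - intros Hj. apply pos_in; auto; lia.
Qed.

Lemma Pj_ex v : exists j, Pj j v.
Proof.
  apply NNPP; intros Hn. destruct Hne as [f Hf].
  destruct (conn_wk adj Hconn f v) as [p [n W]].
  assert (S (length p) <= length p)%nat; [|lia].
  apply (php (fun i z => In (tp (- (-1 - Z.of_nat i)) z) Fk) p).
  - intros i _. 
    destruct (wk_cross adj _ (Pj (-1 - Z.of_nat i)) _ n f v (Pj_bnd (-1 - Z.of_nat i)) W) as [z [Hz Bz]].
    + apply Pj_Fk; auto; lia.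
    + intro H; apply Hn; eauto.
    + eauto.
  - intros i j y H1 H2. pose proof (Pj_disj _ _ y H1 H2). lia.
Qed.

Lemma Pj_nex v : exists j, ~ Pj j v.
Proof.
  apply NNPP; intros Hn. destruct Hne as [f Hf].
  destruct (conn_wk adj Hconn v f) as [p [n W]].
  assert (S (length p) <= length p)%nat; [|lia].
  apply (php (fun i z => In (tp (- Z.of_nat i) z) Fk) p).
  - intros i _.
    destruct (wk_cross adj _ (Pj (Z.of_nat i)) _ n v f (Pj_bnd (Z.of_nat i)) W) as [z [Hz Bz]].
    + apply NNPP; intro H; apply Hn; eauto.
    + rewrite Pj_Fk; auto; lia.
    + eauto.
  - intros i j y H1 H2. pose proof (Pj_disj _ _ y H1 H2). lia.
Qed.

Lemma Pj_ivt v : exists j, Pj (j - 1) v /\ ~ Pj j v.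
Proof.
  destruct (Pj_ex v) as [j0 H0], (Pj_nex v) as [j1 H1].
  assert (j0 < j1) by (apply Z.nle_gt; intro; apply H1; apply (Pj_le' j0); auto).
  assert (K : forall k : nat, forall j, Pj j v -> ~ Pj (j + Z.of_nat k) v -> exists j', Pj (j' - 1) v /\ ~ Pj j' v).
  { induction k; intros j Hj Hk. rewrite Z.add_0_r in Hk; tauto.
    destruct (classic (Pj (j + 1) v)) as [Hq|Hq].
    - apply (IHk (j + 1)); auto. replace (j + 1 + Z.of_nat k) with (j + Z.of_nat (S k)) by lia. auto.
    - exists (j + 1). replace (j + 1 - 1) with j by lia. auto. }
  apply (K (Z.to_nat (j1 - j0)) j0); auto. replace (j0 + Z.of_nat (Z.to_nat (j1 - j0))) with j1 by lia. auto.
Qed.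

Definition lev (v : V) : Z := proj1_sig (constructive_indefinite_description _ (Pj_ivt v)).
Lemma lev_spec v : Pj (lev v - 1) v /\ ~ Pj (lev v) v.
Proof. unfold lev. destruct (constructive_indefinite_description _ _). auto. Qed.

Lemma lev_uniq v j : Pj (j - 1) v -> ~ Pj j v -> lev v = j.
Proof.
  intros H1 H2. destruct (lev_spec v) as [L1 L2].
  destruct (Z.lt_trichotomy (lev v) j) as [h|[h|h]]; auto; exfalso.
  - apply L2. apply (Pj_le' (j - 1)); auto; lia.
  - apply H2. apply (Pj_le' (lev v - 1)); auto; lia.
Qed.

Lemma lev_t v : lev (t v) = lev v + 1.
Proof.
  destruct (lev_spec v) as [L1 L2]. apply lev_uniq.
  - apply Pj_shift. replace (lev v + 1 - 1 - 1) with (lev v - 1) by lia. auto.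
  - rewrite Pj_shift. replace (lev v + 1 - 1) with (lev v) by lia. auto.
Qed.

Lemma lev_edge_aux u v : adj u v -> lev v <= lev u + 1.
Proof.
  intros Huv. apply Z.nlt_ge. intros Hlt.
  destruct (lev_spec u) as [U1 U2], (lev_spec v) as [V1 V2].
  set (j := lev u).
  assert (Pj j v) by (apply (Pj_le' (lev v - 1)); auto; lia).
  assert (Pj (j + 1) v) by (apply (Pj_le' (lev v - 1)); auto; lia).
  assert (~ Pj (j + 1) u) by (intro H'; apply U2; apply Pj_nest; auto).
  assert (E1 := Pj_bnd j v u H (Hsym _ _ Huv) U2).
  assert (E2 := Pj_bnd (j + 1) v u H0 (Hsym _ _ Huv) H1).
  assert (E := Pj_disj _ _ _ E1 E2). lia.
Qed.

Lemma lev_edge u v : adj u v -> lev u - lev v <= 1 /\ lev v - lev u <= 1.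
Proof. intros H. split; [apply Hsym, lev_edge_aux in H|apply lev_edge_aux in H]; lia. Qed.

Definition Dset (v : V) : Prop := Ak (t v) /\ ~ Ak v.

Lemma lev0 v : lev v = 0 -> Dset v.
Proof.
  intros H. destruct (lev_spec v) as [L1 L2]. rewrite H in L1, L2. unfold Pj in *. simpl in *.
  split; auto.
Qed.

Lemma ev_notD_gen a b : ray adj a -> ray adj b -> ev Ak a -> ev (Bk Fk Ak) b ->
  ~ (ev Ak (fun n => t (a n)) /\ ev Ak (fun n => t (b n))) ->
  ev (fun v => ~ Dset v) a /\ ev (fun v => ~ Dset v) b.
Proof.
  intros Ha Hb Ea Eb HD. split.
  - eapply ev_mono; [|exact Ea]. intros v Hv [_ Q]; auto.
  - destruct (ray_side adj Hsym (fun n => t (b n)) Ak Fk (ray_img adj b t ti Hb Ht) (proj2 Hcut)) as [E|E].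
    + exfalso. apply HD. split; auto. destruct Ea as [m Hm]. exists m. intros; apply H3; auto.
    + destruct E as [m Hm]. exists m. intros k Hk [Q _]. destruct (Hm k Hk) as [Q1 _]. auto.
Qed.

Lemma Dfin : exists L0, forall v, Dset v -> In v L0.
Proof.
  apply (key adj Hsym Hlf Hconn r1 r2 Hends Dset (map ti Fk ++ concat (map (nbrs adj Hlf) Fk))).
  - intros x y [Dx1 Dx2] Hxy Hy. apply in_or_app.
    destruct (classic (Ak y)) as [Ay|Ay].
    + right. apply in_concat. exists (nbrs adj Hlf x). split.
      * apply in_map. apply (proj2 Hcut y x); auto.
      * apply nbrs_spec; auto.
    + left. assert (~ Ak (t y)) by (intro; apply Hy; split; auto).
      rewrite (in_map_aut adj ti t); [|apply aut2_inv; exact Ht].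
      apply (proj2 Hcut (t x)); auto. eapply aut2_adj; eauto.
  - destruct (ray_side adj Hsym r1 Ak Fk Hr1 (proj2 Hcut)) as [E1|E1];
    destruct (ray_side adj Hsym r2 Ak Fk Hr2 (proj2 Hcut)) as [E2|E2].
    + exfalso. apply (proj1 (HDS _ _ (aut2_id adj))). split; auto.
    + apply (ev_notD_gen r1 r2 Hr1 Hr2 E1 E2). apply (proj1 (HDS t ti Ht)).
    + apply (ev_notD_gen r2 r1 Hr2 Hr1 E2 E1). intros [Q1 Q2]. apply (proj1 (HDS t ti Ht)); auto.
    + exfalso. apply (proj2 (HDS _ _ (aut2_id adj))). split; auto.
  - destruct (ray_side adj Hsym r1 Ak Fk Hr1 (proj2 Hcut)) as [E1|E1];
    destruct (ray_side adj Hsym r2 Ak Fk Hr2 (proj2 Hcut)) as [E2|E2].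
    + exfalso. apply (proj1 (HDS _ _ (aut2_id adj))). split; auto.
    + apply (ev_notD_gen r1 r2 Hr1 Hr2 E1 E2). apply (proj1 (HDS t ti Ht)).
    + apply (ev_notD_gen r2 r1 Hr2 Hr1 E2 E1). intros [Q1 Q2]. apply (proj1 (HDS t ti Ht)); auto.
    + exfalso. apply (proj2 (HDS _ _ (aut2_id adj))). split; auto.
Qed.

Lemma levels : exists (lv : V -> Z) (L0 : list V),
  (forall v, lv (t v) = lv v + 1) /\ (forall u v, adj u v -> lv u - lv v <= 1 /\ lv v - lv u <= 1) /\
  (forall v, lv v = 0 -> In v L0).
Proof.
  destruct Dfin as [L0 HL0]. exists lev, L0. split; [|split].
  - apply lev_t.
  - apply lev_edge.
  - intros v Hv. apply HL0. apply lev0; auto.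
Qed.

End LV.

Import ListNotations.
Open Scope nat_scope.

Fixpoint enum_lists (len k : nat) : list (list nat) :=
  match len with
  | O => [[]]
  | S l => flat_map (fun x => map (cons x) (enum_lists l k)) (seq 0 (S k))
  end.

Lemma enum_lists_spec len k l : length l = len -> Forall (fun x => x <= k) l -> In l (enum_lists len k).
Proof.
  revert l; induction len as [|len IH]; intros l Hl Hf.
  - destruct l; simpl in *; try discriminate. auto.
  - destruct l as [|x l]; simpl in Hl; try discriminate. inversion Hf; subst.
    cbn [enum_lists]. apply in_flat_map. exists x. split. apply in_seq. lia. apply in_map. apply IH; auto.
Qed.

Lemma map_eq_in {A B : Type} (f g : A -> B) l z : map f l = map g l -> In z l -> f z = g z.
Proof.
  induction l as [|a l IH]; simpl; intros E H; [contradiction|].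
  injection E as E1 E2. destruct H as [<-|H]; auto.
Qed.

Open Scope Z_scope.

Section CL.
Context {V : Type} (adj : V -> V -> Prop).
Hypothesis Hsym : forall x y, adj x y -> adj y x.
Variables t ti : V -> V.
Hypothesis Ht : aut2 adj t ti.
Variable lev : V -> Z.
Hypothesis Hlt : forall v, lev (t v) = lev v + 1.
Hypothesis Hle : forall u v, adj u v -> lev u - lev v <= 1 /\ lev v - lev u <= 1.
Variable L0 : list V.
Hypothesis HL0 : forall v, lev v = 0 -> In v L0.
Variable k : nat.
Variable c0 : V -> V -> nat.
Hypothesis Hc0 : proper_edge_coloring adj k c0.

Notation tp := (tpow t ti).

Lemma lev_tp z : forall v, lev (tp z v) = lev v + z.
Proof.
  induction z using Z.peano_ind; intros v.
  - change (tp 0 v) with v. lia.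
  - replace (Z.succ z) with (z + 1) by lia. rewrite (tpow_succ adj t ti Ht), Hlt, IHz. lia.
  - replace (Z.pred z) with (z - 1) by lia. rewrite (tpow_pred adj t ti Ht).
    assert (E := Hlt (ti (tp z v))). rewrite (proj1 (proj2 Ht)) in E. rewrite IHz in E. lia.
Qed.

Lemma tp_add a b v : tp (a + b) v = tp a (tp b v).
Proof. apply (tpow_add adj t ti Ht). Qed.
Lemma tp_adj z x y : adj x y -> adj (tp z x) (tp z y).
Proof. apply (tpow_adj adj t ti Ht). Qed.
Lemma tp_inj z x y : tp z x = tp z y -> x = y.
Proof. intros E. rewrite <- (tpow_inv adj t ti Ht z x), E, (tpow_inv adj t ti Ht). auto. Qed.
Lemma tp_back z v : tp z (tp (- z) v) = v.
Proof. rewrite <- tp_add. replace (z + - z) with 0 by lia. auto. Qed.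

Definition W := L0 ++ map t L0.
Lemma inW v : lev v = 0 \/ lev v = 1 -> In v W.
Proof.
  intros [H|H]; apply in_or_app; [left; auto|right].
  replace v with (t (ti v)) by apply (proj1 (proj2 Ht)). apply in_map. apply HL0.
  assert (E := Hlt (ti v)). rewrite (proj1 (proj2 Ht)) in E. lia.
Qed.

Definition pattern (n : nat) : list nat :=
  map (fun xy => Nat.min k (c0 (tp (Z.of_nat n) (fst xy)) (tp (Z.of_nat n) (snd xy)))) (list_prod W W).

Lemma pattern_rep : exists a b, (a < b)%nat /\ pattern a = pattern b.
Proof.
  apply (finite_pigeon pattern (enum_lists (length (list_prod W W)) k)).
  intros n. apply enum_lists_spec. unfold pattern. rewrite length_map. auto.
  apply Forall_forall. intros x Hx. apply in_map_iff in Hx. destruct Hx as [xy [<- _]]. lia.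
Qed.

Variables a b : nat.
Hypothesis Hab : (a < b)%nat.
Hypothesis Hpat : pattern a = pattern b.

Let A0 := Z.of_nat a.
Let p := Z.of_nat (b - a).
Lemma p_pos : 0 < p.
Proof. unfold p. lia. Qed.

Lemma PF x y : adj x y -> (lev x = A0 \/ lev x = A0 + 1) -> (lev y = A0 \/ lev y = A0 + 1) ->
  c0 x y = c0 (tp p x) (tp p y).
Proof.
  intros Hxy Hx Hy.
  set (x0 := tp (- A0) x). set (y0 := tp (- A0) y).
  assert (Ix : In x0 W) by (apply inW; unfold x0; rewrite lev_tp; lia).
  assert (Iy : In y0 W) by (apply inW; unfold y0; rewrite lev_tp; lia).
  assert (E := map_eq_in _ _ _ (x0, y0) Hpat (in_prod _ _ _ _ Ix Iy)). simpl in E.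
  assert (Ex : x = tp (Z.of_nat a) x0) by (unfold x0; rewrite tp_back; auto).
  assert (Ey : y = tp (Z.of_nat a) y0) by (unfold y0; rewrite tp_back; auto).
  assert (Ex' : tp p x = tp (Z.of_nat b) x0) by (rewrite Ex, <- tp_add; f_equal; unfold p; lia).
  assert (Ey' : tp p y = tp (Z.of_nat b) y0) by (rewrite Ey, <- tp_add; f_equal; unfold p; lia).
  assert (G1 : c0 x y = c0 (tp (Z.of_nat a) x0) (tp (Z.of_nat a) y0)) by (rewrite <- Ex, <- Ey; auto).
  assert (G2 : c0 (tp p x) (tp p y) = c0 (tp (Z.of_nat b) x0) (tp (Z.of_nat b) y0)) by (rewrite Ex', Ey'; auto).
  destruct Hc0 as [_ [Hk _]].
  assert (K1 := Hk _ _ Hxy).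
  assert (K2 := Hk _ _ (tp_adj p _ _ Hxy)). lia.
Qed.

Definition qq (u v : V) : Z := (Z.min (lev u) (lev v) - A0) / p.
Definition col (u v : V) : nat := c0 (tp (- (qq u v * p)) u) (tp (- (qq u v * p)) v).

Lemma core x y z : adj x y -> adj x z -> y <> z ->
  Z.min (lev x) (lev y) = lev x - 1 -> Z.min (lev x) (lev z) = lev x -> qq x y <> qq x z ->
  col x y <> col x z.
Proof.
  intros Hy Hz Hyz My Mz Hq. unfold col. unfold qq in *. rewrite My, Mz in *.
  set (d := lev x - A0). replace (lev x - 1 - A0) with (d - 1) in * by (unfold d; lia).
  set (Qz := d / p). set (Qy := (d - 1) / p). fold Qz Qy in Hq.
  assert (pp := p_pos).
  assert (D1 := Z.div_mod d p ltac:(lia)). assert (B1 := Z.mod_pos_bound d p pp).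
  assert (D2 := Z.div_mod (d - 1) p ltac:(lia)). assert (B2 := Z.mod_pos_bound (d - 1) p pp).
  fold Qz in D1. fold Qy in D2.
  assert (Hd : d = lev x - A0) by reflexivity.
  assert (Hq' : Qy <> Qz) by exact Hq. clear Hq.
  set (m1 := d mod p) in *. set (m2 := (d - 1) mod p) in *.
  clearbody Qz Qy m1 m2 d.
  assert (Qz = Qy + 1 /\ m1 = 0) as [EQ Em].
  { assert (Qz - Qy = 1). { assert (p * (Qz - Qy) = 1 + m2 - m1) by lia. nia. } split; nia. }
  set (s := Qy * p).
  assert (Ez : Qz * p = s + p) by (unfold s; rewrite EQ; ring).
  rewrite Ez.
  assert (Lx : lev (tp (- (s + p)) x) = A0) by (rewrite lev_tp; unfold s; nia).
  assert (Lz : lev (tp (- (s + p)) z) = A0 \/ lev (tp (- (s + p)) z) = A0 + 1).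
  { rewrite lev_tp. destruct (Hle _ _ Hz). assert (lev x <= lev z) by lia. unfold s; nia. }
  rewrite (PF _ _ (tp_adj _ _ _ Hz) (or_introl Lx) Lz).
  rewrite <- !tp_add. replace (p + - (s + p)) with (- s) by lia.
  destruct Hc0 as [_ [_ Hpr]]. apply Hpr.
  - apply tp_adj; auto.
  - apply tp_adj; auto.
  - intro E. apply tp_inj in E. auto.
Qed.

Lemma col_proper : proper_edge_coloring adj k col.
Proof.
  destruct Hc0 as [Hs [Hk Hpr]]. split; [|split].
  - intros x y Hxy. unfold col, qq. rewrite Z.min_comm. apply Hs. apply tp_adj. auto.
  - intros x y Hxy. unfold col. apply Hk. apply tp_adj. auto.
  - intros x y z Hy Hz Hyz.
    destruct (Z.eq_dec (qq x y) (qq x z)) as [E|E].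
    + unfold col. rewrite E. apply Hpr; try apply tp_adj; auto. intro E'. apply tp_inj in E'. auto.
    + assert (Z.min (lev x) (lev y) <> Z.min (lev x) (lev z)) by (intro E'; apply E; unfold qq; rewrite E'; auto).
      destruct (Hle _ _ Hy), (Hle _ _ Hz).
      destruct (Z.eq_dec (Z.min (lev x) (lev y)) (lev x - 1)) as [Ey|Ey].
      * apply core; auto; lia.
      * intro E'. symmetry in E'. revert E'. apply core; auto; lia.
Qed.

Lemma col_shift (Q : Z) x y : col (tp (Q * p) x) (tp (Q * p) y) = col x y.
Proof.
  unfold col, qq. rewrite !lev_tp.
  replace (Z.min (lev x + Q * p) (lev y + Q * p) - A0) with ((Z.min (lev x) (lev y) - A0) + Q * p) by lia.
  rewrite Z.div_add by (assert (pp := p_pos); lia).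
  rewrite <- !tp_add. f_equal; f_equal; ring.
Qed.

Lemma col_periodic : periodic_coloring adj col.
Proof.
  assert (pp := p_pos).
  exists (flat_map (fun r => map (tp (A0 + Z.of_nat r)) L0) (seq 0 (b - a))).
  intros v. set (Q := (lev v - A0) / p). set (w := tp (- (Q * p)) v).
  assert (D1 := Z.div_mod (lev v - A0) p ltac:(lia)). assert (B1 := Z.mod_pos_bound (lev v - A0) p pp).
  fold Q in D1.
  assert (Lw : A0 <= lev w < A0 + p) by (unfold w; rewrite lev_tp; nia).
  exists w, (tp (Q * p)). split; [|split].
  - apply in_flat_map. exists (Z.to_nat (lev w - A0)). split.
    + apply in_seq. unfold p in Lw. lia.
    + apply in_map_iff. exists (tp (- lev w) w). split.
      * replace (A0 + Z.of_nat (Z.to_nat (lev w - A0))) with (lev w) by lia. apply tp_back.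
      * apply HL0. rewrite lev_tp. lia.
  - split.
    + apply (aut2_aut adj _ _ (tpow_aut adj t ti Ht (Q * p))).
    + intros x y _. apply col_shift.
  - unfold w. apply tp_back.
Qed.

End CL.

Lemma coloring_from_levels {V : Type} (adj : V -> V -> Prop) :
  (forall x y, adj x y -> adj y x) -> forall t ti, aut2 adj t ti ->
  forall lev : V -> Z, (forall v, lev (t v) = lev v + 1) ->
  (forall u v, adj u v -> lev u - lev v <= 1 /\ lev v - lev u <= 1) ->
  forall L0, (forall v, lev v = 0 -> In v L0) ->
  forall k c0, proper_edge_coloring adj k c0 ->
  exists c, proper_edge_coloring adj k c /\ periodic_coloring adj c.
Proof.
  intros Hsym t ti Ht lev Hlt Hle L0 HL0 k c0 Hc0.
  destruct (pattern_rep t ti L0 k c0) as [a [b [Hab Hpat]]].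
  exists (col t ti lev c0 a b). split.
  - apply (col_proper adj t ti Ht lev Hlt Hle L0 HL0 k c0 Hc0 a b Hab Hpat).
  - apply (col_periodic adj t ti Ht lev Hlt L0 HL0 c0 a b Hab).
Qed.

Import ListNotations.
Open Scope nat_scope.

Section FIN.
Context {V : Type} (adj : V -> V -> Prop).
Hypothesis Hsym : forall x y, adj x y -> adj y x.
Hypothesis Hlf : locally_finite adj.
Hypothesis Hconn : connected adj.
Variables r1 r2 : nat -> V.
Hypothesis Hr1 : ray adj r1.
Hypothesis Hr2 : ray adj r2.
Hypothesis Hne : ~ equiv_rays adj r1 r2.

Lemma separator : exists F : list V, forall m n p, path_from_to adj p (r1 m) (r2 n) -> exists x, In x p /\ In x F.
Proof.
  apply NNPP; intro Hn.
  assert (H : forall F : list V, exists p, (exists m n, path_from_to adj p (r1 m) (r2 n)) /\ forall x, In x p -> ~ In x F).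
  { intros F. apply NNPP; intro H1. apply Hn. exists F. intros m n p Hp.
    apply NNPP; intro H2. apply H1. exists p. split; eauto. }
  set (pick := fun F => proj1_sig (constructive_indefinite_description _ (H F))).
  assert (Hpick : forall F, (exists m n, path_from_to adj (pick F) (r1 m) (r2 n)) /\ forall x, In x (pick F) -> ~ In x F).
  { intros F. unfold pick. destruct (constructive_indefinite_description _ _). auto. }
  set (Qs := fix Qs (i : nat) : list (list V) := match i with 0 => [] | S i => Qs i ++ [pick (concat (Qs i))] end).
  set (P := fun i => pick (concat (Qs i))).
  assert (HQ : forall i j, i < j -> In (P i) (Qs j)).
  { intros i j Hij. induction Hij; simpl; apply in_or_app; auto. right; left; auto. }
  apply Hne. exists P. split.
  - intros i. apply (proj1 (Hpick _)).
  - intros i j x Hij H1 H2. destruct (Nat.lt_trichotomy i j) as [h|[h|h]]; [|contradiction|].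
    + apply (proj2 (Hpick (concat (Qs j))) x H2). apply in_concat. exists (P i). split; auto.
    + apply (proj2 (Hpick (concat (Qs i))) x H1). apply in_concat. exists (P j). split; auto.
Qed.

Lemma chain_reach (p : list V) x : adj_chain adj (x :: p) ->
  forall y, In y (x :: p) -> exists k, k <= length p /\ wk adj (fun z => In z (x :: p)) k x y.
Proof.
  revert x. induction p as [|a p IH]; intros x Hc y Hy.
  - destruct Hy as [<-|[]]. exists 0. split; auto. constructor. left; auto.
  - destruct Hy as [<-|Hy]. exists 0. split. lia. constructor. left; auto.
    destruct Hc as [Hxa Hc]. destruct (IH a Hc y Hy) as [k [Hk W]].
    exists (S k). split. simpl; lia. econstructor. left; auto. exact Hxa.
    eapply wk_mono; [|exact W]. intros v Hv. right; auto.
Qed.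

Lemma len_concat (l : list V) L : In l L -> length l <= length (concat L).
Proof.
  induction L as [|a L IH]; simpl; intros H; [contradiction|]. rewrite length_app.
  destruct H as [<-|H]; [lia|]. specialize (IH H). lia.
Qed.

Lemma last_in (p : list V) v : hd_error (rev p) = Some v -> In v p.
Proof.
  intros H. apply in_rev. destruct (rev p); simpl in H; [discriminate|]. injection H as ->. left; auto.
Qed.

Variable SL : list V.
Hypothesis HQT : forall v, exists s f, In s SL /\ automorphism adj f /\ f s = v.
Hypothesis Hends : forall r, ray adj r -> equiv_rays adj r r1 \/ equiv_rays adj r r2.

Lemma build_all : exists Fk Ak t ti, trans_ok adj r1 r2 Fk Ak t ti.
Proof.
  destruct separator as [F HF].
  set (f0 := r1 0).
  set (pth := fun x => proj1_sig (constructive_indefinite_description _ (Hconn f0 x))).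
  assert (Hpth : forall x, path_from_to adj (pth x) f0 x).
  { intros x. unfold pth. destruct (constructive_indefinite_description _ _). auto. }
  set (T := F ++ SL).
  set (F' := f0 :: concat (map pth T)).
  assert (Hf0 : In f0 F') by (left; auto).
  assert (Hreach : forall y, In y F' -> exists k, k <= length F' /\ wk adj (fun z => In z F') k f0 y).
  { intros y [<-|Hy].
    - exists 0. split. lia. constructor; auto.
    - apply in_concat in Hy. destruct Hy as [q [Hq Hyq]]. apply in_map_iff in Hq. destruct Hq as [x [<- Hx]].
      destruct (Hpth x) as [[Hnz [_ Hc]] [Hh _]].
      destruct (pth x) as [|a q] eqn:E; [congruence|]. simpl in Hh. injection Hh as ->.
      destruct (chain_reach q f0 Hc y Hyq) as [k [Hk W]]. exists k. split.
      + assert (length (f0 :: q) <= length (concat (map pth T))).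
        { rewrite <- E. apply len_concat. apply in_map; auto. }
        simpl in *. unfold F'. simpl. lia.
      + eapply wk_mono; [|exact W]. intros v Hv. right. apply in_concat. exists (pth x). split.
        apply in_map; auto. rewrite E; auto. }
  assert (Hlink : forall x y, In x F' -> In y F' -> exists k, k <= 2 * length F' /\ wk adj (fun v => In v F') k x y).
  { intros x y Hx Hy. destruct (Hreach x Hx) as [k1 [K1 W1]], (Hreach y Hy) as [k2 [K2 W2]].
    exists (k1 + k2). split. lia. apply wk_app with f0; auto. apply (wk_rev adj Hsym); auto. }
  assert (HT : forall x, In x T -> In x F').
  { intros x Hx. right. apply in_concat. exists (pth x). split. apply in_map; auto.
    apply last_in. apply (Hpth x). }
  assert (HSF : forall s, In s SL -> In s F') by (intros s Hs; apply HT; apply in_or_app; auto).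
  assert (HFF : forall s, In s F -> In s F') by (intros s Hs; apply HT; apply in_or_app; auto).
  destruct (ray_avoid adj r1 Hr1 F') as [N1 HN1].
  set (C1 := fun v => exists n, wk adj (fun u => ~ In u F') n (r1 N1) v).
  assert (HC1b : bnd adj C1 (fun v => In v F')).
  { intros a b [n Wn] Hab Hb. apply NNPP; intro Fb. apply Hb. exists (S n). eapply wk_snoc; eauto. }
  assert (HC1d : forall v, C1 v -> ~ In v F') by (intros v [n Wn]; exact (wk_end adj _ _ _ _ Wn)).
  assert (Hr1C : ev C1 r1).
  { exists N1. intros m Hm. induction Hm.
    - exists 0. constructor. apply HN1; auto.
    - destruct IHHm as [n Wn]. exists (S n). apply (wk_snoc adj _ _ _ _ _ Wn). apply Hr1. apply HN1; lia. }
  destruct (ray_avoid adj r2 Hr2 F') as [N2 HN2].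
  assert (Hr2A : ev (A F' C1) r2).
  { exists N2. intros n Hn. split. apply HN2; auto.
    intros [k Wk]. destruct (wk_path adj _ _ _ _ Wk) as [p [Hp Hpv]].
    destruct (HF _ _ _ Hp) as [x [Hxp HxF]]. apply (Hpv x Hxp). auto. }
  exact (trans_exists adj Hsym Hlf Hconn r1 r2 Hr1 Hr2 Hends F' (2 * length F') f0 Hf0 Hlink SL HSF HQT
           C1 HC1b HC1d Hr1C Hr2A).
Qed.

End FIN.

Theorem corollary5p5 (V : Type) (adj : V -> V -> Prop) :
  simple_graph adj -> connected adj -> locally_finite adj ->
  quasi_transitive adj -> has_exactly_two_ends adj ->
  forall k : nat, is_chromatic_index adj k ->
  exists c : V -> V -> nat,
    proper_edge_coloring adj k c /\ periodic_coloring adj c.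
Proof.
  intros [Hsym Hirr] Hconn Hlf [S HS] [r1 [r2 [Hr1 [Hr2 [Hne Hends]]]]] k [[c0 Hc0] _].
  destruct (build_all adj Hsym Hlf Hconn r1 r2 Hr1 Hr2 Hne S HS Hends) as [Fk [Ak [t [ti Hok]]]].
  destruct (levels adj Hsym Hlf Hconn r1 r2 Hr1 Hr2 Hends Fk Ak t ti Hok) as [lv [L0 [H1 [H2 H3]]]].
  apply (coloring_from_levels adj Hsym t ti (proj1 (proj2 (proj2 (proj2 Hok)))) lv H1 H2 L0 H3 k c0 Hc0).
Qed.
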